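(* For every word $a_1\cdots a_n$ over a finite alphabet $A$, the following algorithm outputs, for each $i$, the value $x_i$ equal to the minimal length of an X-ranker $r$ with $r(a_1\cdots a_n)=i$: initialize $n_a\gets1$ for all $a\in A$; for $i=1,\dots,n$: let $c=a_i$, set $x_i\gets n_c$, then $n_c\gets n_c+1$, then for all $a\in A$ set $n_a\gets\min(n_a,n_c)$.
   Context: An X-ranker is a nonempty word over $\{\mathsf X_a : a\in A\}$; its length is its length as a word. For a word $w$, $\mathsf X_a(w)$ is the smallest $a$-position of $w$ and $r\mathsf X_a(w)$ is the smallest $a$-position greater than $r(w)$ (possibly undefined). *)

(* Defs.v *)
From mathcomp Require Import all_boot.
Set Implicit Arguments. Unset Strict Implicit. Unset Printing Implicit Defensive.

(* Words over a finite alphabet A are [seq A]; positions are 1-indexed.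
   An X-ranker X_{b1} ... X_{bk} is represented by the nonempty sequence
   [:: b1; ...; bk] of letters. *)

(* [next_pos w a p] = smallest a-position of w strictly greater than p
   (positions 1-indexed; p = 0 gives the smallest a-position). *)
Definition next_pos (A : eqType) (w : seq A) (a : A) (p : nat) : option nat :=
  let s := drop p w in
  let k := find (pred1 a) s in
  if k < size s then Some (p + k + 1) else None.

(* Evaluation of an X-ranker r on w: r(w), possibly undefined (None).
   X_a(w) = next_pos w a 0, and (r X_a)(w) = next_pos w a (r w). *)
Definition xeval (A : eqType) (w : seq A) (r : seq A) : option nat :=
  foldl (fun o a => obind (next_pos w a) o) (Some 0) r.

Fixpoint xalgo_aux (A : finType) (nv : A -> nat) (w : seq A) : seq nat :=
  match w with
  | [::] => [::]
  | c :: w' =>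
      let x := nv c in
      let nc := x.+1 in
      let nv' := fun a => minn (if a == c then nc else nv a) nc in
      x :: xalgo_aux nv' w'
  end.

Definition xalgo (A : finType) (w : seq A) : seq nat :=
  xalgo_aux (fun _ => 1) w.

(* Main.v *)
Require Import Defs.
From mathcomp Require Import all_boot.
From mathcomp Require Import zify.
Set Implicit Arguments. Unset Strict Implicit.
Set Warnings "-notation-overridden".

Definition upd (A : finType) (nv : A -> nat) (c : A) : A -> nat :=
  fun a => minn (if a == c then (nv c).+1 else nv a) (nv c).+1.

Definition st (A : finType) (nv : A -> nat) (s : seq A) := foldl (@upd A) nv s.

Lemma xalgo_aux_cat (A : finType) (s t : seq A) nv :
  xalgo_aux nv (s ++ t) = xalgo_aux nv s ++ xalgo_aux (st nv s) t.
Proof. by elim: s nv => [|c s IH] nv //=; rewrite IH. Qed.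

Lemma size_xalgo_aux (A : finType) (s : seq A) nv : size (xalgo_aux nv s) = size s.
Proof. by elim: s nv => [|c s IH] nv //=; rewrite IH. Qed.

Definition D (A : finType) (w : seq A) (q : nat) :=
  if q is q'.+1 then nth 0 (xalgo w) q' else 0.

Definition noin (A : finType) (w : seq A) x0 (a : A) q m :=
  forall j, q <= j < m -> nth x0 w j != a.

Lemma D_st (A : finType) (w : seq A) x0 m : m < size w ->
  D w m.+1 = st (fun _ => 1) (take m w) (nth x0 w m).
Proof.
move=> hm; rewrite /D /xalgo -{1}(cat_take_drop m w) xalgo_aux_cat.
rewrite (drop_nth x0 hm) nth_cat size_xalgo_aux size_take hm ltnn subnn /=.
done.
Qed.

Lemma inv (A : finType) (w : seq A) x0 m : m <= size w -> forall a,
  (forall q, q <= m -> noin w x0 a q m -> st (fun _ => 1) (take m w) a <= D w q + 1) /\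
  exists q, [/\ q <= m, noin w x0 a q m & st (fun _ => 1) (take m w) a = D w q + 1].
Proof.
elim: m => [|m IH] hm a.
  rewrite take0 /=; split.
    by move=> q; rewrite leqn0 => /eqP -> _.
  by exists 0; split => // j; rewrite ltn0 andbF.
have hm' : m < size w by [].
have [IHa [q [hq hn he]]] := IH (ltnW hm) a.
rewrite (take_nth x0 hm') /st foldl_rcons -/(st _ _) /upd -(D_st x0 hm').
set c := nth x0 w m.
split.
  move=> q' hq' hn'.
  case: (ltngtP q' m.+1) hq' => // [hlt|->] _; last by rewrite addn1 geq_minr.
  have hac : a != c.
    by apply/eqP => hac; move: (hn' m); rewrite -ltnS hlt ltnSn hac eqxx => /(_ isT).
  rewrite (negbTE hac); apply: leq_trans (geq_minl _ _) _; apply: IHa => //.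
  by move=> j /andP [h1 h2]; apply: hn'; rewrite h1 ltnW.
case: (eqVneq a c) => [->|hac].
  exists m.+1; split => //; first by move=> j /andP [h1 h2]; rewrite ltnNge h1 in h2.
  by rewrite minnn addn1.

case: (leqP (st (fun _ => 1) (take m w) a) (D w m.+1).+1) => h.
  exists q; split; first by rewrite ltnW.
    move=> j /andP [h1 h2]; rewrite ltnS leq_eqVlt in h2.
    case/orP: h2 => [/eqP ->|h2]; first by rewrite eq_sym.
    by apply: hn; rewrite h1 h2.
  exact: he.
exists m.+1; split => //; first by move=> j /andP [h1 h2]; rewrite ltnNge h1 in h2.
by rewrite addn1.
Qed.

Lemma next_pos_spec (A : finType) (w : seq A) x0 a q i :
  next_pos w a q = Some i <->
  [/\ q < i, i <= size w, nth x0 w i.-1 = a & noin w x0 a q i.-1].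
Proof.
rewrite /next_pos; set s := drop q w; set k := find (pred1 a) s.
have hs : size s = size w - q by rewrite size_drop.
split.
  case: ifP => // hk [<-].
  have hh : has (pred1 a) s by rewrite has_find.
  have /eqP hf := nth_find x0 hh.
  rewrite nth_drop in hf.
  rewrite -/k in hf; split; [lia | by move: hk; rewrite hs; lia | by rewrite addn1 /= | ].
  move=> j /andP [h1 h2].
  have hjq : j - q < find (pred1 a) s by rewrite -/k; lia.
  by have := before_find x0 hjq; rewrite nth_drop subnKC //= => ->.
case=> h1 h2 h3 h4.
have hik : i.-1 - q < size s by rewrite hs; lia.
have -> : k = i.-1 - q.
  apply/eqP; rewrite eqn_leq; apply/andP; split.
    rewrite leqNgt; apply/negP => hlt.
    have := before_find x0 hlt; rewrite nth_drop subnKC; last lia.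
    by rewrite -h3 /= eqxx.
  rewrite leqNgt; apply/negP => hlt.
  have hh : has (pred1 a) s.
  by rewrite has_find -/k (ltn_trans hlt hik).
  have /eqP := nth_find x0 hh; rewrite nth_drop -/k.
  by apply/eqP; apply: h4; lia.
rewrite hik; congr Some; lia.
Qed.

Lemma char_ab (A : finType) (w : seq A) x0 i : 0 < i <= size w ->
  (forall q, q < i -> noin w x0 (nth x0 w i.-1) q i.-1 -> D w i <= D w q + 1) /\
  exists q, [/\ q < i, noin w x0 (nth x0 w i.-1) q i.-1 & D w i = D w q + 1].
Proof.
case: i => // m; rewrite -[m.+1.-1]/m => hm.
rewrite (D_st x0 hm); have [ha [q [hq hn he]]] := inv x0 (ltnW hm) (nth x0 w m).
split; first by move=> q' hq'; apply: ha.
by exists q.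
Qed.

Lemma xeval_rcons (A : finType) (w r : seq A) b :
  xeval w (rcons r b) = obind (next_pos w b) (xeval w r).
Proof. by rewrite /xeval foldl_rcons. Qed.

Lemma lower (A : finType) (w : seq A) (x0 : A) r : forall i,
  xeval w r = Some i -> D w i <= size r.
Proof.
elim/last_ind: r => [|r b IH] i; first by case=> <-.
rewrite xeval_rcons; case E: (xeval w r) => [q|] //= /(next_pos_spec _ x0).
case=> h1 h2 h3 h4.
have hi : 0 < i <= size w by rewrite h2 andbT; lia.
have [ha _] := char_ab x0 hi.
rewrite size_rcons; apply: leq_trans (ha _ h1 _) _; first by rewrite h3.
by rewrite addn1 ltnS; apply: IH.
Qed.

Lemma exist_r (A : finType) (w : seq A) (x0 : A) i : i <= size w ->
  exists r, xeval w r = Some i /\ size r = D w i.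
Proof.
elim/ltn_ind: i => i IH hi.
case: (posnP i) => [->|hi0]; first by exists [::].
have hi' : 0 < i <= size w by rewrite hi0 hi.
have [_ [q [hq hn he]]] := char_ab x0 hi'.
have [r [hr hs]] := IH q hq (ltnW (leq_trans hq hi)).
exists (rcons r (nth x0 w i.-1)); split.
  by rewrite xeval_rcons hr /=; apply/(next_pos_spec _ x0).
by rewrite size_rcons he hs addn1.
Qed.

Theorem lemma15 (A : finType) (w : seq A) (i : nat) :
  1 <= i <= size w ->
  (exists r : seq A, [/\ r != [::], xeval w r = Some i &
                         size r = nth 0 (xalgo w) i.-1]) /\
  (forall r : seq A, r != [::] -> xeval w r = Some i ->
                     nth 0 (xalgo w) i.-1 <= size r).
Proof.
case: i => // m /= hm.
case: w hm => // x0 w' hm.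
split.
  have [r [hr hs]] := exist_r x0 hm.
  exists r; split => //.
  by apply/eqP => Er; move: hr; rewrite Er.
move=> r _ hr; exact: (lower x0 hr).
Qed.
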